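(* Let $\sigma>0$ be fixed and $z\in\mathbb{C}$. (i) If $|\Re z|\ge\sigma$, then $|e^z-1|\ge1-e^{-\sigma}$. (ii) Let $R=|z|$ and $\mathcal{J}=\bigcup_{m\in\mathbb{Z}}(2\pi m-\pi/2,\,2\pi m+\pi/2)$. Then for $z$ with $|\Re z|<\sigma$, $$|e^z-1|\ge|\sin R|\,\mathbf{1}_{\{R\in\mathcal{J}\}}+\mathbf{1}_{\{R\in\mathcal{J}^c\}}+O(1/R)\qquad\text{as }R\to\infty,$$ i.e. there are constants $C,R_0>0$ such that for all $z$ with $|\Re z|<\sigma$ and $R=|z|\ge R_0$, $|e^z-1|\ge|\sin R|\,\mathbf{1}_{\{R\in\mathcal{J}\}}+\mathbf{1}_{\{R\in\mathcal{J}^c\}}-C/R$.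
   Context: $\mathbf{1}_S$ denotes the indicator function of a set $S$. *)

(* Defs.v *)
From Stdlib Require Import Reals ZArith ClassicalEpsilon.
From Coquelicot Require Import Coquelicot.
Open Scope R_scope.

Definition Cexp (z : C) : C :=
  (exp (Re z) * cos (Im z), exp (Re z) * sin (Im z)).

Definition indic (P : Prop) : R :=
  if excluded_middle_informative P then 1 else 0.

Definition inJ (r : R) : Prop :=
  exists m : Z, 2 * PI * IZR m - PI / 2 < r < 2 * PI * IZR m + PI / 2.

(* Main.v *)
Require Import Defs.
From Stdlib Require Import Reals ZArith Lra Lia ClassicalEpsilon.
From Coquelicot Require Import Coquelicot.
Open Scope R_scope.

Lemma cm (x y : R) : Cmod (Cminus (Cexp (x,y)) (RtoC 1)) =
  sqrt ((exp x * cos y - 1)^2 + (exp x * sin y)^2).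
Proof. unfold Cmod, Cminus, Cexp, RtoC. simpl. f_equal; ring. Qed.

Lemma le_sqrt a b : (0 < b -> b * b <= a) -> b <= sqrt a.
Proof.
  intros H. destruct (Rle_or_lt b 0) as [h|h].
  - pose proof (sqrt_pos a). lra.
  - rewrite <- (sqrt_square b) by lra. apply sqrt_le_1_alt. exact (H h).
Qed.

Lemma absq a : Rabs a * Rabs a = a * a.
Proof. rewrite <- Rabs_mult. apply Rabs_right, Rle_ge, Rle_0_sqr. Qed.

Lemma exp_mono x y : x <= y -> exp x <= exp y.
Proof. intros [h|h]. apply Rlt_le, exp_increasing; auto. subst; lra. Qed.

Lemma hdiv a c r : 0 < r -> a * r <= c -> a <= c / r.
Proof.
  intros hr h. apply Rmult_le_reg_r with r; auto.
  unfold Rdiv. rewrite Rmult_assoc, Rinv_l by lra. lra.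
Qed.

Lemma abs_sin_le u : Rabs (sin u) <= Rabs u.
Proof.
  assert (Hp : forall v, 0 < v -> Rabs (sin v) <= v).
  { intros v hv. pose proof (sin_lt_x v hv).
    pose proof PI2_1. pose proof (SIN_bound v).
    destruct (Rle_or_lt 1 v).
    - apply Rabs_le; split; lra.
    - assert (0 <= sin v) by (apply sin_ge_0; lra).
      apply Rabs_le; split; lra. }
  destruct (Rtotal_order u 0) as [h|[h|h]].
  - rewrite (Rabs_left u) by lra. replace (sin u) with (- sin (-u)).
    rewrite Rabs_Ropp. apply Hp; lra. rewrite sin_neg; ring.
  - subst. rewrite sin_0, Rabs_R0. lra.
  - rewrite (Rabs_right u) by lra. apply Hp; lra.
Qed.

Lemma sin_lip a b : Rabs (sin a - sin b) <= Rabs (a - b).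
Proof.
  rewrite form4, !Rabs_mult.
  pose proof (abs_sin_le ((a-b)/2)). pose proof (COS_bound ((a+b)/2)).
  assert (Rabs (cos ((a+b)/2)) <= 1) by (apply Rabs_le; split; lra).
  replace (Rabs ((a-b)/2)) with (Rabs (a-b) / 2) in H.
  2:{ unfold Rdiv. rewrite Rabs_mult, (Rabs_right (/2)) by lra. ring. }
  rewrite Rabs_right by lra.
  pose proof (Rabs_pos (sin ((a - b) / 2))). pose proof (Rabs_pos (cos ((a + b) / 2))).
  nra.
Qed.

Lemma cos_lip a b : Rabs (cos a - cos b) <= Rabs (a - b).
Proof.
  rewrite form2, !Rabs_mult.
  pose proof (abs_sin_le ((a-b)/2)). pose proof (SIN_bound ((a+b)/2)).
  assert (Rabs (sin ((a+b)/2)) <= 1) by (apply Rabs_le; split; lra).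
  replace (Rabs ((a-b)/2)) with (Rabs (a-b) / 2) in H.
  2:{ unfold Rdiv. rewrite Rabs_mult, (Rabs_right (/2)) by lra. ring. }
  rewrite Rabs_left by lra.
  pose proof (Rabs_pos (sin ((a - b) / 2))). pose proof (Rabs_pos (sin ((a + b) / 2))).
  nra.
Qed.

Lemma cos_periodZ t m : cos (t + 2 * PI * IZR m) = cos t.
Proof.
  destruct (Z_le_gt_dec 0 m) as [h|h].
  - rewrite <- (Z2Nat.id m h), <- INR_IZR_INZ.
    replace (t + 2 * PI * INR (Z.to_nat m)) with (t + 2 * INR (Z.to_nat m) * PI) by ring.
    apply cos_period.
  - assert (h' : (0 <= - m)%Z) by lia.
    pose proof (cos_period (t + 2 * PI * IZR m) (Z.to_nat (-m))) as E.
    rewrite INR_IZR_INZ, (Z2Nat.id _ h'), opp_IZR in E.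
    rewrite <- E. f_equal. ring.
Qed.

Lemma cos_notJ r : ~ inJ r -> cos r <= 0.
Proof.
  intros nJ. pose proof PI_RGT_0.
  set (s := (r + PI/2) / (2*PI)).
  destruct (archimed s) as [h1 h2].
  set (m := (up s - 1)%Z).
  assert (Hm : IZR m = IZR (up s) - 1) by (unfold m; rewrite minus_IZR; reflexivity).
  assert (Hs : s * (2*PI) = r + PI/2) by (unfold s; field; lra).
  assert (A1 : 2*PI*IZR m <= r + PI/2) by nra.
  assert (A2 : r + PI/2 < 2*PI*IZR m + 2*PI) by nra.
  replace r with ((r - 2*PI*IZR m) + 2*PI*IZR m) by ring.
  rewrite cos_periodZ.
  destruct (Rle_or_lt (r - 2*PI*IZR m) (-(PI/2))) as [h|h].
  - replace (r - 2 * PI * IZR m) with (-(PI/2)) by lra. rewrite cos_neg, cos_PI2; lra.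
  - destruct (Rle_or_lt (PI/2) (r - 2*PI*IZR m)) as [h'|h'].
    + apply cos_le_0; lra.
    + exfalso. apply nJ. exists m. lra.
Qed.

Theorem lemmaA1 (sigma : R) (hsigma : 0 < sigma) :
  (forall z : C, sigma <= Rabs (Re z) ->
     1 - exp (- sigma) <= Cmod (Cminus (Cexp z) (RtoC 1)))
  /\
  (exists Cst R0 : R, 0 < Cst /\ 0 < R0 /\
     forall z : C, Rabs (Re z) < sigma -> R0 <= Cmod z ->
       Rabs (sin (Cmod z)) * indic (inJ (Cmod z)) + indic (~ inJ (Cmod z))
         - Cst / Cmod z
       <= Cmod (Cminus (Cexp z) (RtoC 1))).
Proof.
  assert (E1 : exp (-sigma) * exp sigma = 1).
  { rewrite <- exp_plus, Rplus_opp_l, exp_0. reflexivity. }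
  pose proof (exp_pos sigma). pose proof (exp_pos (-sigma)).
  assert (Es : 1 <= exp sigma) by (rewrite <- exp_0; apply exp_mono; lra).
  split.
  - intros [x y] Hx. simpl in Hx. rewrite cm. apply le_sqrt. intros _.
    pose proof (exp_pos x). pose proof (sin2_cos2 y). pose proof (COS_bound y).
    unfold Rsqr in *.
    assert (B : 1 - exp (-sigma) <= Rabs (exp x - 1)).
    { destruct (Rcase_abs x) as [hx|hx].
      - rewrite Rabs_left in Hx by lra.
        assert (exp x <= exp (-sigma)) by (apply exp_mono; lra).
        rewrite Rabs_left1 by nra. lra.
      - rewrite Rabs_right in Hx by lra.
        assert (exp sigma <= exp x) by (apply exp_mono; lra).
        rewrite Rabs_right by lra. nra. }
    assert (0 <= 1 - exp (-sigma)) by nra.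
    assert (Rabs (exp x - 1) * Rabs (exp x - 1) = (exp x - 1) * (exp x - 1))
    by apply absq.
    nra.
  - set (Cst := exp sigma * sigma^2 + 1).
    assert (0 < Cst) by (unfold Cst; nra).
    exists Cst, 1. split; [auto|split; [lra|]].
    intros [x y] Hx HR. simpl in Hx. rewrite cm.
    set (R := Cmod (x,y)) in *.
    assert (ER : R = sqrt (x^2 + y^2)) by reflexivity.
    assert (R2 : R * R = x^2 + y^2).
    { rewrite ER. apply sqrt_sqrt. nra. }
    assert (Ry : Rabs y <= R).
    { rewrite ER. rewrite <- sqrt_Rsqr_abs. apply sqrt_le_1_alt. unfold Rsqr. nra. }
    pose proof (Rabs_pos y).
    assert (Ay : Rabs y * Rabs y = y * y) by apply absq.
    assert (x2 : x^2 <= sigma^2).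
    { assert (Rabs x * Rabs x = x * x) by apply absq.
      pose proof (Rabs_pos x). nra. }
    set (d := R - Rabs y).
    assert (dR : d * R <= sigma^2) by (unfold d; nra).
    assert (d0 : 0 <= d) by (unfold d; lra).
    assert (dC : d <= Cst / R) by (apply hdiv; [lra| unfold Cst; nra]).
    assert (dC2 : exp sigma * d <= Cst / R) by (apply hdiv; [lra| unfold Cst; nra]).
    assert (Csy : sin (Rabs y) * sin (Rabs y) = sin y * sin y /\ cos (Rabs y) = cos y).
    { destruct (Rcase_abs y).
      - rewrite Rabs_left by lra. rewrite sin_neg, cos_neg. split; [ring|auto].
      - rewrite Rabs_right by lra. auto. }
    destruct Csy as [Cs1 Cs2].
    pose proof (exp_pos x). pose proof (sin2_cos2 y). unfold Rsqr in *.
    assert (ex : exp x <= exp sigma).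
    { apply exp_mono. pose proof (Rle_abs x). lra. }
    assert (G1 : sin y * sin y <= (exp x * cos y - 1)^2 + (exp x * sin y)^2).
    { assert (Q : (exp x * cos y - 1)^2 + (exp x * sin y)^2 - sin y * sin y
               = (exp x - cos y) * (exp x - cos y)) by nra.
      pose proof (Rle_0_sqr (exp x - cos y)). unfold Rsqr in *. lra. }
    assert (G2 : (1 - exp x * cos y) * (1 - exp x * cos y) <= (exp x * cos y - 1)^2 + (exp x * sin y)^2).
    { pose proof (Rle_0_sqr (exp x * sin y)). unfold Rsqr in *. nra. }
    unfold indic.
    destruct (excluded_middle_informative (inJ R)) as [hJ|hJ];
    destruct (excluded_middle_informative (~ inJ R)) as [hJ'|hJ']; try tauto.
    + apply le_sqrt.
      assert (SL : Rabs (sin R - sin (Rabs y)) <= d).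
      { pose proof (sin_lip R (Rabs y)) as L.
        rewrite (Rabs_right (R - Rabs y)) in L by lra. exact L. }
      pose proof (Rabs_triang_inv (sin R) (sin (Rabs y))).
      set (b := Rabs (sin R) * 1 + 0 - Cst / R).
      intros hb.
      assert (b <= Rabs (sin (Rabs y))) by (unfold b; lra).
      assert (Rabs (sin (Rabs y)) * Rabs (sin (Rabs y)) = sin y * sin y)
        by (rewrite absq; exact Cs1).
      assert (b * b <= Rabs (sin (Rabs y)) * Rabs (sin (Rabs y)))
        by (apply Rmult_le_compat; lra).
      lra.
    + apply le_sqrt.
      pose proof (cos_notJ R hJ).
      assert (SL : Rabs (cos y - cos R) <= d).
      { pose proof (cos_lip (Rabs y) R) as L.
        rewrite (Rabs_left1 (Rabs y - R)) in L by lra. rewrite Cs2 in L.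
        unfold d; lra. }
      assert (cy : cos y <= d) by (pose proof (Rle_abs (cos y - cos R)); lra).
      assert (K : exp x * cos y <= Cst / R).
      { destruct (Rle_or_lt (cos y) 0). nra. nra. }
      set (b := 0 * 0 + 1 - Cst / R).
      intros hb.
      assert (b <= 1 - exp x * cos y) by (unfold b; lra).
      nra.
Qed.
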